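(* Let $G$ and $H$ be finite simple graphs without isolated vertices, of orders $n$ and $m$ respectively (with $n,m\ge 2$). Then \[ \gamma_{2t}(G\Box H)\ge\tfrac{3}{2}\min\{n,m\}. \]
   Context: For a graph $G=(V,E)$, a set $S\subseteq V$ is a total $2$-dominating set if every vertex of $V$ (including those in $S$) is adjacent to at least $2$ vertices of $S$; $\gamma_{2t}(G)$ is the minimum cardinality of such a set. $G\Box H$ denotes the Cartesian product: vertex set $V(G)\times V(H)$, with $(u_1,v_1)\sim(u_2,v_2)$ iff either $u_1=u_2$ and $v_1\sim v_2$, or $v_1=v_2$ and $u_1\sim u_2$. *)

(* Defs.v *)
From mathcomp Require Import all_boot.
Set Implicit Arguments. Unset Strict Implicit. Unset Printing Implicit Defensive.

Definition simple_graph (T : finType) (e : rel T) : Prop :=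
  symmetric e /\ irreflexive e.

Definition no_isolated (T : finType) (e : rel T) : Prop :=
  forall x : T, exists y : T, e x y.

Definition cart_prod (T1 T2 : finType) (e1 : rel T1) (e2 : rel T2)
  : rel (T1 * T2) :=
  fun u v => ((u.1 == v.1) && e2 u.2 v.2) || ((u.2 == v.2) && e1 u.1 v.1).

Definition total_2dom (T : finType) (e : rel T) (S : {set T}) : Prop :=
  forall x : T, 2 <= #|[set y in S | e x y]|.

(* gamma_{2t}(G) >= k  iff every total 2-dominating set has size >= k. *)

(* Main.v *)
Require Import Defs.
From mathcomp Require Import all_boot.
From mathcomp Require Import zify.

Section Aux.
Variables (T1 T2 : finType) (S : {set T1 * T2}).

Definition ra (u : T1) := #|[set s in S | s.1 == u]|.
Definition cb (v : T2) := #|[set s in S | s.2 == v]|.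

Lemma sum_fst (F : T1 -> nat) :
  \sum_(s in S) F s.1 = \sum_u ra u * F u.
Proof.
rewrite (partition_big (fun s : T1 * T2 => s.1) xpredT) //=.
apply: eq_bigr => u _.
rewrite (eq_bigr (fun _ => F u)); last by move=> s /andP[_ /eqP->].
rewrite sum_nat_const /ra; congr (_ * _).
by apply: eq_card => s; rewrite !inE.
Qed.

Lemma sum_snd (F : T2 -> nat) :
  \sum_(s in S) F s.2 = \sum_v cb v * F v.
Proof.
rewrite (partition_big (fun s : T1 * T2 => s.2) xpredT) //=.
apply: eq_bigr => u _.
rewrite (eq_bigr (fun _ => F u)); last by move=> s /andP[_ /eqP->].
rewrite sum_nat_const /cb; congr (_ * _).
by apply: eq_card => s; rewrite !inE.
Qed.

End Aux.
Arguments ra {T1 T2}. Arguments cb {T1 T2}. Arguments sum_fst {T1 T2}. Arguments sum_snd {T1 T2}.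

Definition W (k : nat) := if k == 1 then 6 else if k == 2 then 3 else 2.

Lemma W_row k : 1 <= k -> 6 <= k * W k.
Proof.
case: k => [|[|[|k]]] // _; rewrite /W /=; lia.
Qed.

Lemma W_pair a b : 1 <= a -> 1 <= b -> 4 <= a + b -> W a + W b <= 8.
Proof.
case: a => [|[|[|a]]] //; case: b => [|[|[|b]]] //; rewrite /W /=; lia.
Qed.

Theorem corollary10 (T1 T2 : finType) (e1 : rel T1) (e2 : rel T2) :
  simple_graph e1 -> simple_graph e2 ->
  no_isolated e1 -> no_isolated e2 ->
  2 <= #|T1| -> 2 <= #|T2| ->
  forall S : {set T1 * T2}, total_2dom (cart_prod e1 e2) S ->
    3 * minn #|T1| #|T2| <= 2 * #|S|.
Proof.
move=> [_ irr1] [_ irr2] _ _ _ _ S HS.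
have key : forall u v, 2 + 2 * ((u, v) \in S) <= ra S u + cb S v.
  move=> u v.
  have H := HS (u, v).
  set A := [set s in S | s.1 == u]; set B := [set s in S | s.2 == v].
  have sub : [set y in S | cart_prod e1 e2 (u, v) y]
      \subset (A :\ (u, v)) :|: (B :\ (u, v)).
    apply/subsetP => -[x y]; rewrite !inE /cart_prod /=.
    case/andP=> xS /orP[/andP[/eqP ex e]|/andP[/eqP ey e]]; subst.
      rewrite xS eqxx /=; apply/orP; left; rewrite andbT.
      by apply/negP => /eqP[ey]; rewrite ey irr2 in e.
    rewrite xS eqxx /=; apply/orP; right; rewrite andbT.
    by apply/negP => /eqP[ex]; rewrite ex irr1 in e.
  have := leq_trans H (subset_leq_card sub).
  move/leq_trans => /(_ _ (leq_card_setU _ _)).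
  rewrite /ra /cb -/A -/B (cardsD1 (u, v) A) (cardsD1 (u, v) B).
  have -> : ((u, v) \in A) = ((u, v) \in S) by rewrite !inE eqxx andbT.
  have -> : ((u, v) \in B) = ((u, v) \in S) by rewrite !inE eqxx andbT.
  set X := #|A :\ (u, v)|; set Y := #|B :\ (u, v)|. case: ((u, v) \in S) => /=; lia.
have cardS1 : #|S| = \sum_u ra S u.
  rewrite -sum1_card (sum_fst S (fun _ => 1)).
  by apply: eq_bigr => u _; rewrite muln1.
have cardS2 : #|S| = \sum_v cb S v.
  rewrite -sum1_card (sum_snd S (fun _ => 1)).
  by apply: eq_bigr => u _; rewrite muln1.
case: (boolP [exists u, ra S u == 0]) => [/existsP[u /eqP u0]|].
  have : 2 * #|T2| <= #|S|.
    rewrite cardS2 -sum1_card big_distrr /=; apply: leq_sum => v _.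
    have := key u v; rewrite u0; lia.
  move=> ?; lia.
rewrite negb_exists => /forallP ha.
case: (boolP [exists v, cb S v == 0]) => [/existsP[v /eqP v0]|].
  have : 2 * #|T1| <= #|S|.
    rewrite cardS1 -sum1_card big_distrr /=; apply: leq_sum => u _.
    have := key u v; rewrite v0; lia.
  move=> ?; lia.
rewrite negb_exists => /forallP hb.
have h1 : 6 * #|T1| <= \sum_(s in S) W (ra S s.1).
  rewrite (sum_fst S (fun u => W (ra S u))) -sum1_card big_distrr /=; apply: leq_sum => u _.
  rewrite muln1; apply: W_row; have := ha u; lia.
have h2 : 6 * #|T2| <= \sum_(s in S) W (cb S s.2).
  rewrite (sum_snd S (fun v => W (cb S v))) -sum1_card big_distrr /=; apply: leq_sum => v _.
  rewrite muln1; apply: W_row; have := hb v; lia.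
have h3 : \sum_(s in S) W (ra S s.1) + \sum_(s in S) W (cb S s.2) <= 8 * #|S|.
  rewrite -big_split -sum1_card big_distrr /=; apply: leq_sum => -[u v] uS /=.
  rewrite muln1; apply: W_pair.
  - have := ha u; lia.
  - have := hb v; lia.
  - by have := key u v; rewrite uS.
lia.
Qed.
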